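(* Let $(\mathcal{A},\cdot,\alpha)$ be a commutative Hom-associative algebra with a derivation $D$ such that $\alpha D=D\alpha$, and let $\lambda\in\mathbb{C}$ be fixed. Define $x\circ y=x\cdot D(y)+\lambda\, x\cdot y$ and $[x,y]^-=x\cdot D(y)-y\cdot D(x)$ for $x,y\in\mathcal{A}$. Then $(\mathcal{A},[\cdot,\cdot]^-,\circ,\alpha)$ is a Hom Gel'fand-Dorfman bialgebra.
   Context: All vector spaces are over $\mathbb{C}$. A Hom-associative algebra is a vector space $\mathcal{A}$ with a bilinear map $\cdot$ and linear map $\alpha$ such that $\alpha(x)\cdot(y\cdot z)=(x\cdot y)\cdot\alpha(z)$ for all $x,y,z$; it is commutative if $x\cdot y=y\cdot x$. A derivation is a linear map $D$ with $D(x\cdot y)=D(x)\cdot y+x\cdot D(y)$. A Hom-Novikov algebra is a vector space with a bilinear operation $\circ$ and a linear endomorphism $\alpha$ such that $(x\circ y)\circ\alpha(z)-\alpha(x)\circ(y\circ z)=(y\circ x)\circ\alpha(z)-\alpha(y)\circ(x\circ z)$ and $(x\circ y)\circ\alpha(z)=(x\circ z)\circ\alpha(y)$. A Hom-Lie algebra is a vector space with a bilinear map $[\cdot,\cdot]$ and linear map $\alpha$ with $[x,y]=-[y,x]$ and $[[x,y],\alpha(z)]+[[y,z],\alpha(x)]+[[z,x],\alpha(y)]=0$. A Hom Gel'fand-Dorfman bialgebra is a vector space $\mathcal{A}$ with a linear endomorphism $\alpha$ and two bilinear operations $[\cdot,\cdot],\circ$ such that $(\mathcal{A},[\cdot,\cdot],\alpha)$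 is a Hom-Lie algebra, $(\mathcal{A},\circ,\alpha)$ is a Hom-Novikov algebra, and $[x\circ y,\alpha(z)]-[x\circ z,\alpha(y)]+[x,y]\circ\alpha(z)-[x,z]\circ\alpha(y)-\alpha(x)\circ[y,z]=0$ for all $x,y,z$. *)

(* Defs.v *)
From HB Require Import structures.
From mathcomp Require Import all_boot all_order all_algebra.
From mathcomp Require Import complex.
From mathcomp Require Import reals.
Set Implicit Arguments. Unset Strict Implicit. Unset Printing Implicit Defensive.
Import GRing.Theory.
Local Open Scope ring_scope.

Section HomDefs.
Variables (K : nzRingType) (V : lmodType K).

Definition bilinear_op (m : V -> V -> V) : Prop :=
  (forall a x y z, m (a *: x + y) z = a *: m x z + m y z) /\
  (forall a x y z, m x (a *: y + z) = a *: m x y + m x z).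

Definition linear_map (f : V -> V) : Prop :=
  forall a x y, f (a *: x + y) = a *: f x + f y.

Definition hom_associative (m : V -> V -> V) (al : V -> V) : Prop :=
  forall x y z, m (al x) (m y z) = m (m x y) (al z).

Definition commutative_op (m : V -> V -> V) : Prop :=
  forall x y, m x y = m y x.

Definition derivation (m : V -> V -> V) (D : V -> V) : Prop :=
  linear_map D /\ forall x y, D (m x y) = m (D x) y + m x (D y).

Definition is_hom_assoc_algebra (m : V -> V -> V) (al : V -> V) : Prop :=
  bilinear_op m /\ linear_map al /\ hom_associative m al.

Definition is_hom_novikov (o : V -> V -> V) (al : V -> V) : Prop :=
  bilinear_op o /\ linear_map al /\
  (forall x y z, o (o x y) (al z) - o (al x) (o y z)
                 = o (o y x) (al z) - o (al y) (o x z)) /\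
  (forall x y z, o (o x y) (al z) = o (o x z) (al y)).

Definition is_hom_lie (br : V -> V -> V) (al : V -> V) : Prop :=
  bilinear_op br /\ linear_map al /\
  (forall x y, br x y = - br y x) /\
  (forall x y z, br (br x y) (al z) + br (br y z) (al x) + br (br z x) (al y) = 0).

Definition is_hom_GD_bialgebra (br o : V -> V -> V) (al : V -> V) : Prop :=
  is_hom_lie br al /\ is_hom_novikov o al /\
  (forall x y z, br (o x y) (al z) - br (o x z) (al y) + o (br x y) (al z)
                 - o (br x z) (al y) - o (al x) (br y z) = 0).

End HomDefs.

(* Main.v *)
Require Import Defs.
From HB Require Import structures.
From mathcomp Require Import all_boot all_order all_algebra ring.
From mathcomp Require Import complex reals.
Import GRing.Theory.
Local Open Scope ring_scope.
Set Implicit Arguments.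

Section L.
Variables (K : comNzRingType) (V : lmodType K).
Lemma lin0 (f : V -> V) : linear_map f -> f 0 = 0.
Proof. move=> hf; have := hf 1 0 0; rewrite !scale1r addr0 => e.
by apply: (@addrI _ (f 0)); rewrite addr0 -e. Qed.
Lemma linD (f : V -> V) : linear_map f -> forall x y, f (x + y) = f x + f y.
Proof. by move=> hf x y; rewrite -{1}[x]scale1r hf scale1r. Qed.
Lemma linZ (f : V -> V) : linear_map f -> forall a x, f (a *: x) = a *: f x.
Proof. by move=> hf a x; rewrite -[a *: x]addr0 hf (lin0 hf) addr0. Qed.
Lemma linN (f : V -> V) : linear_map f -> forall x, f (- x) = - f x.
Proof. by move=> hf x; rewrite -scaleN1r linZ // scaleN1r. Qed.
End L.

Section SZ.
Variables (K : comNzRingType) (V : lmodType K).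
Definition SZ := (K * V)%type.
HB.instance Definition _ := GRing.Zmodule.on SZ.
Definition szone : SZ := (1, 0).
Definition szmul (p q : SZ) : SZ := (p.1 * q.1, p.1 *: q.2 + q.1 *: p.2).
Lemma szmulA : associative szmul.
Proof. move=> [a u] [b v] [c w]; rewrite /szmul /=; congr pair; first by rewrite mulrA.
by rewrite !scalerDr !scalerA !addrA mulrC [c * a]mulrC [c * b]mulrC [b*a]mulrC addrAC. Qed.
Lemma szmulC : commutative szmul.
Proof. move=> [a u] [b v]; rewrite /szmul /= mulrC addrC //. Qed.
Lemma szmul1 : left_id szone szmul.
Proof. move=> [a u]; rewrite /szmul /= mul1r scale1r scaler0 addr0 //. Qed.
Lemma szmulDl : left_distributive szmul +%R.
Proof. move=> [a u] [b v] [c w]; rewrite /szmul /=; congr pair; first by rewrite mulrDl.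
by rewrite scalerDl scalerDr addrACA. Qed.
Lemma szone_neq0 : szone != 0.
Proof. apply/eqP => -[]; apply/eqP; exact: oner_neq0. Qed.
HB.instance Definition _ := GRing.Zmodule_isComNzRing.Build SZ szmulA szmulC szmul1 szmulDl szone_neq0.
Definition inj (v : V) : SZ := (0, v).
Definition sc (a : K) : SZ := (a, 0).
Lemma injD u v : inj (u + v) = inj u + inj v. Proof. by rewrite /inj; congr pair; rewrite addr0. Qed.
Lemma injN u : inj (- u) = - inj u. Proof. by rewrite /inj; congr pair; rewrite oppr0. Qed.
Lemma inj0 : inj 0 = 0. Proof. by []. Qed.
Lemma injZ a u : inj (a *: u) = sc a * inj u.
Proof. by rewrite /inj /sc /= /GRing.mul /= /szmul /= mulr0 scale0r addr0. Qed.
Lemma inj_inj u v : inj u = inj v -> u = v. Proof. by case. Qed.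

Variables (mul : V -> V -> V) (al D : V -> V) (lam : K).
Hypotheses (ha : is_hom_assoc_algebra mul al) (hc : commutative_op mul)
  (hd : derivation mul D) (hDa : forall x, al (D x) = D (al x)).

Let hl : forall z, linear_map (fun u => mul u z).
Proof. by case: ha => -[h _] _ z a x y; apply: h. Qed.
Let hr : forall z, linear_map (mul z).
Proof. by case: ha => -[_ h] _ z a x y; apply: h. Qed.
Let hal : linear_map al. Proof. by case: ha => _ []. Qed.
Let hD : linear_map D. Proof. by case: hd. Qed.
Let has : hom_associative mul al. Proof. by case: ha => _ []. Qed.

Lemma mulDl x y z : mul (x + y) z = mul x z + mul y z. Proof. exact: (linD (hl z)). Qed.
Lemma mulDr x y z : mul z (x + y) = mul z x + mul z y. Proof. exact: (linD (hr z)). Qed.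
Lemma mulNl x z : mul (- x) z = - mul x z. Proof. exact: (linN (hl z)). Qed.
Lemma mulNr x z : mul z (- x) = - mul z x. Proof. exact: (linN (hr z)). Qed.
Lemma mulZl a x z : mul (a *: x) z = a *: mul x z. Proof. exact: (linZ (hl z)). Qed.
Lemma mulZr a x z : mul z (a *: x) = a *: mul z x. Proof. exact: (linZ (hr z)). Qed.
Lemma DD x y : D (x + y) = D x + D y. Proof. exact: linD. Qed.
Lemma DN x : D (- x) = - D x. Proof. exact: linN. Qed.
Lemma DZ a x : D (a *: x) = a *: D x. Proof. exact: linZ. Qed.
Lemma Dmul x y : D (mul x y) = mul (D x) y + mul x (D y). Proof. by case: hd. Qed.
Lemma Dal x : D (al x) = al (D x). Proof. by rewrite hDa. Qed.

Definition T a b c := mul (al a) (mul b c).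
Lemma TE1 a b c : mul (al a) (mul b c) = T a b c. Proof. by []. Qed.
Lemma TE2 a b c : mul (mul b c) (al a) = T a b c. Proof. by rewrite /T hc. Qed.
Lemma TS2 a b c : T a b c = T a c b. Proof. by rewrite /T (hc b). Qed.
Lemma TS1 a b c : T a b c = T b a c.
Proof. by rewrite /T has (hc a) -has hc. Qed.

Ltac expand := rewrite ?(mulDl, mulDr, mulNl, mulNr, mulZl, mulZr, DD, DN, DZ, Dmul, Dal);
  rewrite ?(TE1, TE2).

Ltac rk x y z e := lazymatch e with
 | D ?e' => let r := rk x y z e' in constr:((3 + r)%nat)
 | x => constr:(0%nat) | y => constr:(1%nat) | z => constr:(2%nat) end.

Ltac sortT x y z := repeat match goal with
 |- context [T ?a ?b ?c] =>
   let ra := rk x y z a in let rb := rk x y z b in let rc := rk x y z c in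
   first [ let t := eval compute in (Nat.ltb rb ra) in
           lazymatch t with true => rewrite (TS1 a b c) end
         | let t := eval compute in (Nat.ltb rc rb) in
           lazymatch t with true => rewrite (TS2 a b c) end ]
 end.

Ltac fin := apply: inj_inj; rewrite ?(injD, injN, injZ, inj0); ring.

Lemma main_GD :
  is_hom_GD_bialgebra
    (fun x y => mul x (D y) - mul y (D x))
    (fun x y => mul x (D y) + lam *: mul x y) al.
Proof.
split.
- split; [|split; [exact: hal|split]].
  + split=> a x y z /=; expand; fin.
  + by move=> x y /=; rewrite opprB.
  + move=> x y z /=; expand; sortT x y z; fin.
- split.
  + split; [|split; [exact: hal|split]].
    * split=> a x y z /=; expand; fin.
    * move=> x y z /=; expand; sortT x y z; fin.
    * move=> x y z /=; expand; sortT x y z; fin.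
  + move=> x y z /=; expand; sortT x y z; fin.
Qed.
End SZ.

Local Open Scope complex_scope.

Theorem theorem3p8 (R : realType) (V : lmodType R[i])
    (mul : V -> V -> V) (al D : V -> V) (lam : R[i]) :
  is_hom_assoc_algebra mul al ->
  commutative_op mul ->
  derivation mul D ->
  (forall x, al (D x) = D (al x)) ->
  is_hom_GD_bialgebra
    (fun x y => mul x (D y) - mul y (D x))
    (fun x y => mul x (D y) + lam *: mul x y)
    al.
Proof. move=> ha hc hd hDa; exact: (main_GD lam ha hc hd hDa). Qed.
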